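(* Under the setting of the merge junction with link $I_1=[a_1,b_1]$ whose fundamental diagram satisfies (F), capacities $C_1,C_3>0$, split $\eta_1\in(0,1)$, cycle $\Delta_A>0$, fixed data $N_{ini},N_{up}$, and assuming no spillback ($S_3(t)\equiv C_3$), the Lax–Hopf solutions $N^{\Delta_A}$ and $N^0$ on $I_1$ with data $(N_{ini},N_{up},N^{\Delta_A}_{down})$ and $(N_{ini},N_{up},N^0_{down})$ satisfy, for all $(t,x)\in[0,T]\times[a_1,b_1]$, $$\big|N^{\Delta_A}(t,x)-N^0(t,x)\big|\le \eta_1(1-\eta_1)\Delta_A\min\{C_1,C_3\}\le\tfrac14\Delta_A\min\{C_1,C_3\}.$$
   Context: Assumption (F): $f:[0,\rho_j]\to[0,C]$ continuous and concave, $f(0)=f(\rho_j)=0$, $C=\max f$; $v=f'(0+)$, $-w=f'(\rho_j-)$ finite; $f^*(u)=\sup_{\rho\in[0,\rho_j]}\{f(\rho)-u\rho\}$, $u\in[-w,v]$. Lax–Hopf solution on $[a,b]$ with data $(N_{ini},N_{up},N_{down})$: with $\mathcal{C}(0,x)=N_{ini}(x)$, $\mathcal{C}(s,a)=N_{up}(s)$, $\mathcal{C}(s,b)=N_{down}(s)$ (minimum at corners), $\mathcal{C}=+\infty$ elsewhere, set $N(t,x)=\inf_{u\in[-w,v],\tau\ge0}\{\mathcal{C}(t-\tau,x-\tau u)+\tau f^*(u)\}$. Signal control: $u_1:[0,T]\to\{0,1\}$ is $\Delta_A$-periodic and, for some offset $\theta$, $u_1(t)=1$ iff $(t-\theta)\bmod\Delta_A\in[0,\eta_1\Delta_A)$.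 Effective supply: $\mathcal{S}_3^1(t)=\min\{C_1,S_3(t)\}$. Downstream data: $N^{\Delta_A}_{down}(t)=\int_0^t\mathcal{S}^1_3(\tau)u_1(\tau)\,d\tau$ (on-and-off model) and $N^0_{down}(t)=\int_0^t\eta_1\mathcal{S}^1_3(\tau)\,d\tau$ (continuum model). *)

(* Defs.v *)
From Stdlib Require Import Reals.
Open Scope R_scope.

Definition is_glb (E : R -> Prop) (m : R) : Prop :=
  (forall y, E y -> m <= y) /\ (forall m', (forall y, E y -> m' <= y) -> m' <= m).

Definition assumption_F (f : R -> R) (rhoj C v w : R) : Prop :=
  0 < rhoj /\
  (forall x, 0 <= x <= rhoj -> limit1_in f (fun y => 0 <= y <= rhoj) (f x) x) /\
  (forall x y l, 0 <= x <= rhoj -> 0 <= y <= rhoj -> 0 <= l <= 1 ->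
       l * f x + (1 - l) * f y <= f (l * x + (1 - l) * y)) /\
  f 0 = 0 /\ f rhoj = 0 /\
  (forall x, 0 <= x <= rhoj -> 0 <= f x <= C) /\
  (exists x, 0 <= x <= rhoj /\ f x = C) /\
  limit1_in (fun h => (f h - f 0) / h) (fun h => 0 < h <= rhoj) v 0 /\
  limit1_in (fun h => (f (rhoj + h) - f rhoj) / h) (fun h => - rhoj <= h < 0) (- w) 0.

Definition is_conjugate (f : R -> R) (rhoj v w : R) (fstar : R -> R) : Prop :=
  forall u, - w <= u <= v ->
    is_lub (fun y => exists rho, 0 <= rho <= rhoj /\ y = f rho - u * rho) (fstar u).

(* The set of values C(t - tau, x - tau u) + tau f*(u), u in [-w,v], tau >= 0,
   where the value condition C is N_ini on {0} x [a,b], N_up on [0,T] x {a},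
   N_down on [0,T] x {b} (+infinity elsewhere, i.e. no contribution); at the
   corners all applicable values are included, so the infimum takes the minimum. *)
Definition LH_set (fstar : R -> R) (v w a b : R)
    (Nini Nup Ndown : R -> R) (t x : R) (y : R) : Prop :=
  exists u tau, - w <= u <= v /\ 0 <= tau /\
    let s := t - tau in let z := x - tau * u in
    ((s = 0 /\ a <= z <= b /\ y = Nini z + tau * fstar u) \/
     (z = a /\ 0 <= s /\ y = Nup s + tau * fstar u) \/
     (z = b /\ 0 <= s /\ y = Ndown s + tau * fstar u)).

Definition LH_solution (fstar : R -> R) (v w a b T : R)
    (Nini Nup Ndown : R -> R) (N : R -> R -> R) : Prop :=
  forall t x, 0 <= t <= T -> a <= x <= b ->
    is_glb (LH_set fstar v w a b Nini Nup Ndown t x) (N t x).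

Definition rmod (y Delta : R) : R := Delta * frac_part (y / Delta).

Definition signal (eta Delta theta : R) (t : R) : R :=
  if Rlt_dec (rmod (t - theta) Delta) (eta * Delta) then 1 else 0.

(* Main.v *)
Require Import Defs.
From Stdlib Require Import Reals Lra Lia ZArith.
Open Scope R_scope.

Lemma Int_part_eq (z : R) (k : Z) : IZR k <= z < IZR k + 1 -> Int_part z = k.
Proof.
  intros [H1 H2]. unfold Int_part.
  rewrite <- (tech_up z (k + 1)); [lia | rewrite plus_IZR; lra | rewrite plus_IZR; lra].
Qed.

Lemma const_int (g : R -> R) (a b K : R) (pr : Riemann_integrable g a b) :
  a <= b -> (forall x, a < x < b -> g x = K) -> RiemannInt pr = K * (b - a).
Proof.
  intros Hab Hg.
  rewrite (RiemannInt_P18 pr (RiemannInt_P14 a b K)); auto.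
  apply RiemannInt_P15.
Qed.

Definition Psi (eta D theta x : R) : R :=
  D * (eta * IZR (Int_part ((x - theta) / D)) + Rmin (frac_part ((x - theta) / D)) eta).

Lemma u_eq (D theta x : R) : 0 < D -> x - theta = (x - theta) / D * D.
Proof. intros; field; lra. Qed.

Lemma Int_part_in (D theta x : R) (k : Z) : 0 < D ->
  theta + IZR k * D <= x < theta + (IZR k + 1) * D ->
  Int_part ((x - theta) / D) = k.
Proof.
  intros HD [H1 H2]. apply Int_part_eq.
  pose proof (u_eq D theta x HD). set (u := (x - theta) / D) in *.
  split; nra.
Qed.

Lemma Psi_k (eta D theta x : R) (k : Z) : 0 < D -> 0 < eta < 1 ->
  theta + IZR k * D <= x <= theta + (IZR k + 1) * D ->
  Psi eta D theta x = D * eta * IZR k + Rmin (x - theta - IZR k * D) (eta * D).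
Proof.
  intros HD He [H1 H2]. unfold Psi, frac_part.
  destruct (Rle_lt_or_eq_dec _ _ H2) as [H3|H3].
  - rewrite (Int_part_in D theta x k HD (conj H1 H3)).
    pose proof (u_eq D theta x HD). set (u := (x - theta) / D) in *.
    unfold Rmin; destruct (Rle_dec _ _); destruct (Rle_dec _ _); nra.
  - assert (Hu : (x - theta) / D = IZR k + 1) by (rewrite H3; field; lra).
    rewrite Hu. rewrite (Int_part_eq (IZR k + 1) (k + 1)) by (rewrite plus_IZR; lra).
    rewrite plus_IZR.
    unfold Rmin; destruct (Rle_dec _ _); destruct (Rle_dec _ _); nra.
Qed.

Lemma signal_k (eta D theta x : R) (k : Z) : 0 < D ->
  theta + IZR k * D <= x < theta + (IZR k + 1) * D ->
  signal eta D theta x = if Rlt_dec (x - theta - IZR k * D) (eta * D) then 1 else 0.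
Proof.
  intros HD Hx. unfold signal, rmod, frac_part.
  rewrite (Int_part_in D theta x k HD Hx).
  replace (D * ((x - theta) / D - IZR k)) with (x - theta - IZR k * D) by (field; lra).
  reflexivity.
Qed.

Section Base.
Variables (eta D theta c : R) (g : R -> R).
Hypothesis HD : 0 < D.
Hypothesis He : 0 < eta < 1.
Hypothesis Hg : forall s, g s = c * signal eta D theta s.

Lemma B1 (k : Z) (a b : R) (pr : Riemann_integrable g a b) :
  theta + IZR k * D <= a <= b -> b <= theta + IZR k * D + eta * D ->
  RiemannInt pr = c * (Psi eta D theta b - Psi eta D theta a).
Proof.
  intros Ha Hb.
  assert (0 < eta * D) by nra. assert (eta * D < D) by nra.
  rewrite (const_int g a b c pr) by (first [lra | intros x Hx; rewrite Hg;
    rewrite (signal_k eta D theta x k) by (try split; nra);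
    destruct (Rlt_dec _ _); [ring | exfalso; lra]]).
  rewrite (Psi_k eta D theta a k), (Psi_k eta D theta b k) by (try split; lra).
  unfold Rmin; destruct (Rle_dec _ _); destruct (Rle_dec _ _); nra.
Qed.

Lemma B2 (k : Z) (a b : R) (pr : Riemann_integrable g a b) :
  theta + IZR k * D + eta * D <= a <= b -> b <= theta + (IZR k + 1) * D ->
  RiemannInt pr = c * (Psi eta D theta b - Psi eta D theta a).
Proof.
  intros Ha Hb.
  assert (0 < eta * D) by nra. assert (eta * D < D) by nra.
  rewrite (const_int g a b 0 pr) by (first [lra | intros x Hx; rewrite Hg;
    rewrite (signal_k eta D theta x k) by (try split; nra);
    destruct (Rlt_dec _ _); [exfalso; lra | ring]]).
  rewrite (Psi_k eta D theta a k), (Psi_k eta D theta b k) by (try split; lra).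
  rewrite !Rmin_right by lra; ring.
Qed.

Lemma Bk (k : Z) (a b : R) (pr : Riemann_integrable g a b) :
  theta + IZR k * D <= a <= b -> b <= theta + (IZR k + 1) * D ->
  RiemannInt pr = c * (Psi eta D theta b - Psi eta D theta a).
Proof.
  intros Ha Hb. set (m := theta + IZR k * D + eta * D).
  destruct (Rle_dec b m) as [H1|H1]. { apply (B1 k); unfold m in *; lra. }
  destruct (Rle_dec m a) as [H2|H2]. { apply (B2 k); unfold m in *; lra. }
  assert (Hm : a <= m <= b) by lra.
  pose (pr1 := RiemannInt_P22 pr Hm). pose (pr2 := RiemannInt_P23 pr Hm).
  rewrite <- (RiemannInt_P26 pr1 pr2 pr).
  rewrite (B1 k a m pr1) by (unfold m in *; lra).
  rewrite (B2 k m b pr2) by (unfold m in *; nra).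
  ring.
Qed.

Lemma Lgen (n : nat) : forall a b (pr : Riemann_integrable g a b), a <= b ->
  (Int_part ((b - theta) / D) - Int_part ((a - theta) / D) = Z.of_nat n)%Z ->
  RiemannInt pr = c * (Psi eta D theta b - Psi eta D theta a).
Proof.
  induction n as [|n IH]; intros a b pr Hab Hn.
  - set (k := Int_part ((a - theta) / D)) in *.
    assert (Hkb : Int_part ((b - theta) / D) = k) by lia.
    pose proof (base_Int_part ((a - theta) / D)) as [A1 A2].
    pose proof (base_Int_part ((b - theta) / D)) as [B1' B2'].
    fold k in A1, A2. rewrite Hkb in B1', B2'.
    pose proof (u_eq D theta a HD). pose proof (u_eq D theta b HD).
    set (ua := (a - theta) / D) in *. set (ub := (b - theta) / D) in *.
    apply (Bk k); nra.
  - set (k := Int_part ((a - theta) / D)) in *.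
    pose proof (base_Int_part ((a - theta) / D)) as [A1 A2].
    pose proof (base_Int_part ((b - theta) / D)) as [B1' B2'].
    fold k in A1, A2.
    assert (Hkb : (k + 1 <= Int_part ((b - theta) / D))%Z) by lia.
    apply IZR_le in Hkb. rewrite plus_IZR in Hkb.
    pose proof (u_eq D theta a HD). pose proof (u_eq D theta b HD).
    set (p := theta + (IZR k + 1) * D).
    assert (Hp : a <= p <= b).
    { unfold p. set (ua := (a - theta) / D) in *. set (ub := (b - theta) / D) in *. nra. }
    assert (Hup : Int_part ((p - theta) / D) = (k + 1)%Z).
    { apply Int_part_eq. replace ((p - theta) / D) with (IZR k + 1) by (unfold p; field; lra).
      rewrite plus_IZR; lra. }
    pose (pr1 := RiemannInt_P22 pr Hp). pose (pr2 := RiemannInt_P23 pr Hp).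
    rewrite <- (RiemannInt_P26 pr1 pr2 pr).
    assert (theta + IZR k * D <= a).
    { set (ua := (a - theta) / D) in *. nra. }
    rewrite (Bk k a p pr1) by (unfold p in *; lra).
    rewrite (IH p b pr2) by (first [lra | rewrite Hup; lia]).
    ring.
Qed.

Lemma Lfull (a b : R) (pr : Riemann_integrable g a b) : a <= b ->
  RiemannInt pr = c * (Psi eta D theta b - Psi eta D theta a).
Proof.
  intros Hab.
  assert (Hm : (Int_part ((a - theta) / D) <= Int_part ((b - theta) / D))%Z).
  { pose proof (base_Int_part ((a - theta) / D)) as [A1 A2].
    pose proof (base_Int_part ((b - theta) / D)) as [B1' B2'].
    assert ((a - theta) / D <= (b - theta) / D).
    { unfold Rdiv; apply Rmult_le_compat_r; [left; apply Rinv_0_lt_compat; lra | lra]. }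
    assert (IZR (Int_part ((a - theta) / D)) < IZR (Int_part ((b - theta) / D)) + 1) by lra.
    rewrite <- plus_IZR in H0. apply lt_IZR in H0. lia. }
  apply (Lgen (Z.to_nat (Int_part ((b - theta) / D) - Int_part ((a - theta) / D))));
    auto; rewrite Z2Nat.id; lia.
Qed.

Lemma Psi_bound (x : R) :
  0 <= Psi eta D theta x - eta * (x - theta) <= eta * (1 - eta) * D.
Proof.
  unfold Psi. pose proof (u_eq D theta x HD).
  pose proof (base_fp ((x - theta) / D)) as [F1 F2].
  unfold frac_part in *.
  set (u := (x - theta) / D) in *. set (k := IZR (Int_part u)) in *.
  rewrite H. set (r := u - k) in *. replace u with (k + r) by (unfold r; ring).
  assert (0 < D * (1 - eta)) by nra. assert (0 < D * eta) by nra.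
  unfold Rmin; destruct (Rle_dec _ _).
  - replace (D * (eta * k + r) - eta * ((k + r) * D)) with (D * (1 - eta) * r) by ring.
    split; nra.
  - replace (D * (eta * k + eta) - eta * ((k + r) * D)) with (D * eta * (1 - r)) by ring.
    split; nra.
Qed.

End Base.

Lemma LH_cmp fstar v w a b T Nini Nup D1 D2 N1 N2 K :
  0 <= K -> (forall s, 0 <= s <= T -> D1 s <= D2 s + K) ->
  LH_solution fstar v w a b T Nini Nup D1 N1 ->
  LH_solution fstar v w a b T Nini Nup D2 N2 ->
  forall t x, 0 <= t <= T -> a <= x <= b -> N1 t x <= N2 t x + K.
Proof.
  intros HK HD H1 H2 t x Ht Hx.
  destruct (H1 t x Ht Hx) as [L1 _]. destruct (H2 t x Ht Hx) as [_ G2].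
  cut (N1 t x - K <= N2 t x). lra.
  apply G2. intros y [u [tau [Hu [Htau Hc]]]]. cbv zeta in Hc.
  destruct Hc as [[Hs [Hz Hy]]|[[Hz [Hs Hy]]|[Hz [Hs Hy]]]].
  - assert (N1 t x <= y); [|lra].
    apply L1; exists u, tau; split; [|split]; auto; cbv zeta; left; auto.
  - assert (N1 t x <= y); [|lra].
    apply L1; exists u, tau; split; [|split]; auto; cbv zeta; right; left; auto.
  - assert (N1 t x <= D1 (t - tau) + tau * fstar u).
    { apply L1; exists u, tau; split; [|split]; auto; cbv zeta; right; right; auto. }
    pose proof (HD (t - tau) ltac:(lra)). lra.
Qed.

Theorem theorem4p3
  (f : R -> R) (rhoj Cf v w : R) (fstar : R -> R)
  (a1 b1 T C1 C3 eta1 DeltaA theta : R)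
  (S3 Nini Nup NdownD Ndown0 : R -> R) (ND N0 : R -> R -> R) :
  assumption_F f rhoj Cf v w ->
  is_conjugate f rhoj v w fstar ->
  a1 < b1 -> 0 < T ->
  0 < C1 -> 0 < C3 -> 0 < eta1 < 1 -> 0 < DeltaA ->
  (forall t, S3 t = C3) ->
  (forall t, 0 <= t <= T ->
     exists pr : Riemann_integrable
                   (fun s => Rmin C1 (S3 s) * signal eta1 DeltaA theta s) 0 t,
       NdownD t = RiemannInt pr) ->
  (forall t, 0 <= t <= T ->
     exists pr : Riemann_integrable (fun s => eta1 * Rmin C1 (S3 s)) 0 t,
       Ndown0 t = RiemannInt pr) ->
  LH_solution fstar v w a1 b1 T Nini Nup NdownD ND ->
  LH_solution fstar v w a1 b1 T Nini Nup Ndown0 N0 ->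
  forall t x, 0 <= t <= T -> a1 <= x <= b1 ->
    Rabs (ND t x - N0 t x) <= eta1 * (1 - eta1) * DeltaA * Rmin C1 C3 /\
    eta1 * (1 - eta1) * DeltaA * Rmin C1 C3 <= / 4 * DeltaA * Rmin C1 C3.
Proof.
  intros _ _ Hab HT HC1 HC3 He HD HS HND HN0 HLD HL0 t x Ht Hx.
  set (c := Rmin C1 C3).
  assert (Hc : 0 < c) by (unfold c, Rmin; destruct (Rle_dec _ _); lra).
  set (K := eta1 * (1 - eta1) * DeltaA * c).
  assert (Hdata : forall s, 0 <= s <= T -> Rabs (NdownD s - Ndown0 s) <= K).
  { intros s Hs. destruct (HND s Hs) as [pr1 E1]. destruct (HN0 s Hs) as [pr2 E2].
    rewrite (Lfull eta1 DeltaA theta c _ HD He) in E1 by (try lra; intros; rewrite HS; reflexivity).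
    rewrite (const_int _ 0 s (eta1 * c) pr2) in E2 by (try lra; intros; rewrite HS; reflexivity).
    rewrite E1, E2.
    pose proof (Psi_bound eta1 DeltaA theta HD He s).
    pose proof (Psi_bound eta1 DeltaA theta HD He 0).
    set (A := Psi eta1 DeltaA theta s - eta1 * (s - theta)) in *.
    set (B := Psi eta1 DeltaA theta 0 - eta1 * (0 - theta)) in *.
    replace (c * (Psi eta1 DeltaA theta s - Psi eta1 DeltaA theta 0) - eta1 * c * (s - 0))
      with (c * (A - B)) by (unfold A, B; ring).
    apply Rabs_le. unfold K. split; nra. }
  split.
  - apply Rabs_le. split.
    + pose proof (LH_cmp fstar v w a1 b1 T Nini Nup Ndown0 NdownD N0 ND K) as L.
      assert (N0 t x <= ND t x + K); [|lra].
      apply L; auto; [unfold K; apply Rmult_le_pos; [|lra]; apply Rmult_le_pos; [|lra]; apply Rmult_le_pos; lra|]. intros s Hs. pose proof (Hdata s Hs) as Q.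
      unfold Rabs in Q; destruct (Rcase_abs _) in Q; lra.
    + pose proof (LH_cmp fstar v w a1 b1 T Nini Nup NdownD Ndown0 ND N0 K) as L.
      assert (ND t x <= N0 t x + K); [|lra].
      apply L; auto; [unfold K; apply Rmult_le_pos; [|lra]; apply Rmult_le_pos; [|lra]; apply Rmult_le_pos; lra|]. intros s Hs. pose proof (Hdata s Hs) as Q.
      unfold Rabs in Q; destruct (Rcase_abs _) in Q; lra.
  - assert (0 < DeltaA * c) by nra.
    assert (Hq : eta1 * (1 - eta1) <= / 4) by (pose proof (Rle_0_sqr (eta1 - / 2)); unfold Rsqr in *; lra).
    unfold K; replace (eta1 * (1 - eta1) * DeltaA * c) with (eta1 * (1 - eta1) * (DeltaA * c)) by ring.
    replace (/ 4 * DeltaA * c) with (/ 4 * (DeltaA * c)) by ring.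
    apply Rmult_le_compat_r; lra.
Qed.
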